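(* Let $M_m$ satisfy $G_m\ge0$. If $u,v\in M_m$ satisfy $0<r_u<r_v$ and $\gamma_u$ has finite turn angle, then $T_{\gamma_u}\le T_{\gamma_v}$, with equality if and only if $G_m$ vanishes on $[r_u,\infty)$.
   Context: For a smooth function $m\colon[0,\infty)\to[0,\infty)$ with $m(0)=0$, $m'(0)=1$, $m>0$ on $(0,\infty)$ and smooth odd extension, $M_m$ is $\mathbb R^2$ with metric $dr^2+m(r)^2d\theta^2$ (polar coordinates $(r,\theta)$ about origin $o$), curvature $G_m=-m''/m$. For $q\ne o$, $r_q$ is its $r$-coordinate and $\gamma_q\colon[0,\infty)\to M_m$ is the unit speed geodesic starting at $q$ in direction $\partial_\theta$. For a geodesic $\gamma$ on $[0,\infty)$ not passing through $o$, its turn angle is $T_\gamma=\int_0^\infty|\dot\theta_{\gamma(s)}|\,ds\in[0,\infty]$. *)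

(* Defs.v *)
From Stdlib Require Import Reals.
From Coquelicot Require Import Coquelicot.
Open Scope R_scope.

(* Admissible profile m: smooth odd function on R (the smooth odd extension
   of m : [0,oo) -> [0,oo)), with m(0)=0, m'(0)=1, m>0 on (0,oo). *)
Definition is_profile (m : R -> R) : Prop :=
  (forall (n : nat) (x : R), ex_derive_n m n x) /\
  (forall x, m (- x) = - m x) /\
  m 0 = 0 /\
  Derive m 0 = 1 /\
  (forall r, 0 < r -> 0 < m r).

Definition Gm (m : R -> R) (r : R) : R := - Derive (Derive m) r / m r.

(* (rr, th) are the polar coordinates (r, theta) of a geodesic of
   M_m = (R^2, dr^2 + m(r)^2 dtheta^2) avoiding the origin o:
   the geodesic equations with Christoffel symbols
   Gamma^r_{theta theta} = - m m',  Gamma^theta_{r theta} = m'/m. *)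
Definition polar_geodesic (m : R -> R) (rr th : R -> R) : Prop :=
  forall s : R,
    0 < rr s /\
    ex_derive rr s /\ ex_derive th s /\
    ex_derive (Derive rr) s /\ ex_derive (Derive th) s /\
    Derive (Derive rr) s = m (rr s) * Derive m (rr s) * (Derive th s) ^ 2 /\
    Derive (Derive th) s
      = - (2 * Derive m (rr s) / m (rr s)) * Derive rr s * Derive th s.

(* gamma_q for q with polar coordinates (rq, thq), rq > 0: the unit speed
   geodesic starting at q in direction d/dtheta, i.e. with initial velocity
   (1/m(rq)) d/dtheta. *)
Definition gamma_of (m : R -> R) (rq thq : R) (rr th : R -> R) : Prop :=
  polar_geodesic m rr th /\
  rr 0 = rq /\ th 0 = thq /\
  Derive rr 0 = 0 /\ Derive th 0 = / m rq.

(* Turn angle T = int_0^oo |theta'(s)| ds in [0, +oo], as the supremum of the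
   partial integrals of the nonnegative integrand. *)
Definition turn_angle (th : R -> R) : Rbar :=
  Lub_Rbar (fun y => exists t, 0 <= t /\
              y = RInt (fun s => Rabs (Derive th s)) 0 t).

(* Main.v *)
From Stdlib Require Import Reals Lra Psatz ClassicalEpsilon.
From Coquelicot Require Import Coquelicot.
Require Import Defs.
Open Scope R_scope.

Lemma mvt (f : R -> R) a b : (forall x, ex_derive f x) -> a < b ->
  exists c, a < c < b /\ f b - f a = Derive f c * (b - a).
Proof.
  intros Hd Hab.
  destruct (MVT_cor2 f (Derive f) a b Hab) as [c [Hc1 Hc2]].
  - intros c _. apply is_derive_Reals. apply Derive_correct. apply Hd.
  - exists c. split; [exact Hc2 | exact Hc1].
Qed.

Lemma nondecr_deriv (f : R -> R) a b : (forall x, ex_derive f x) -> a <= b ->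
  (forall x, a < x < b -> 0 <= Derive f x) -> f a <= f b.
Proof.
  intros Hd Hab Hpos. destruct (Req_dec a b) as [->|Hne]; [lra|].
  destruct (mvt f a b Hd) as [c [Hc E]]; [lra|].
  specialize (Hpos c Hc). nra.
Qed.

Lemma incr_deriv (f : R -> R) a b : (forall x, ex_derive f x) -> a < b ->
  (forall x, a < x < b -> 0 < Derive f x) -> f a < f b.
Proof.
  intros Hd Hab Hpos.
  destruct (mvt f a b Hd) as [c [Hc E]]; [lra|].
  specialize (Hpos c Hc). nra.
Qed.

Lemma const_deriv (f : R -> R) a b : (forall x, is_derive f x 0) -> f a = f b.
Proof.
  intros H. assert (Hd : forall x, ex_derive f x) by (intro x; exists 0; apply H).
  assert (HD : forall x, Derive f x = 0) by (intro x; apply is_derive_unique, H).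
  destruct (Rtotal_order a b) as [Hl|[He|Hl]].
  - destruct (mvt f a b Hd Hl) as [c [_ E]]. rewrite HD in E. lra.
  - now subst.
  - destruct (mvt f b a Hd Hl) as [c [_ E]]. rewrite HD in E. lra.
Qed.

Section Profile.
Variable m : R -> R.
Hypothesis Hp : is_profile m.
Hypothesis HG : forall r, 0 < r -> 0 <= Gm m r.

Lemma dm x : ex_derive m x.
Proof. destruct Hp as [H _]. exact (H 1%nat x). Qed.
Lemma ddm x : ex_derive (Derive m) x.
Proof. destruct Hp as [H _]. exact (H 2%nat x). Qed.
Lemma dddm x : ex_derive (Derive (Derive m)) x.
Proof. destruct Hp as [H _]. exact (H 3%nat x). Qed.
Lemma m0 : m 0 = 0.
Proof. destruct Hp as [_ [_ [H _]]]. exact H. Qed.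
Lemma m1_0 : Derive m 0 = 1.
Proof. destruct Hp as [_ [_ [_ [H _]]]]. exact H. Qed.
Lemma m_pos r : 0 < r -> 0 < m r.
Proof. destruct Hp as [_ [_ [_ [_ H]]]]. exact (H r). Qed.

Lemma m2_nonpos r : 0 < r -> Derive (Derive m) r <= 0.
Proof.
  intros Hr. pose proof (HG r Hr) as H. unfold Gm in H. pose proof (m_pos r Hr).
  set (a := Derive (Derive m) r) in *. set (b := m r) in *.
  assert (E : - a / b * b = - a) by (field; lra). nra.
Qed.

Lemma m1_noninc a b : 0 <= a <= b -> Derive m b <= Derive m a.
Proof.
  intros Hab. destruct (Req_dec a b) as [->|Hne]; [lra|].
  destruct (mvt (Derive m) a b ddm) as [c [Hc E]]; [lra|].
  pose proof (m2_nonpos c ltac:(lra)). nra.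
Qed.

Lemma m1_le1 r : 0 <= r -> Derive m r <= 1.
Proof. intros. rewrite <- m1_0. apply m1_noninc. lra. Qed.

Lemma m_le_id r : 0 <= r -> m r <= r.
Proof.
  intros Hr. destruct (Req_dec r 0) as [->|Hne]; [rewrite m0; lra|].
  destruct (mvt m 0 r dm) as [c [Hc E]]; [lra|].
  rewrite m0 in E. pose proof (m1_le1 c ltac:(lra)). nra.
Qed.

End Profile.

Definition geo (m rr th : R -> R) (r0 : R) :=
  polar_geodesic m rr th /\ rr 0 = r0 /\ Derive rr 0 = 0 /\ Derive th 0 = / m r0.

Lemma cont_of_ex_derive (f : R -> R) x : ex_derive f x -> continuity_pt f x.
Proof. intros H. apply continuity_pt_filterlim. exact (@ex_derive_continuous R_AbsRing R_NormedModule f x H). Qed.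

Section Geo.
Variable m : R -> R.
Hypothesis Hp : is_profile m.
Hypothesis HG : forall r, 0 < r -> 0 <= Gm m r.
Variables rr th : R -> R.
Variable r0 : R.
Hypothesis Hg : geo m rr th r0.

Lemma rr_pos s : 0 < rr s.
Proof. destruct Hg as [H _]. apply (H s). Qed.
Lemma drr s : ex_derive rr s.
Proof. destruct Hg as [H _]. apply (H s). Qed.
Lemma dth s : ex_derive th s.
Proof. destruct Hg as [H _]. apply (H s). Qed.
Lemma ddrr s : ex_derive (Derive rr) s.
Proof. destruct Hg as [H _]. apply (H s). Qed.
Lemma ddth s : ex_derive (Derive th) s.
Proof. destruct Hg as [H _]. apply (H s). Qed.
Lemma eq_rr s : Derive (Derive rr) s = m (rr s) * Derive m (rr s) * (Derive th s) ^ 2.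
Proof. destruct Hg as [H _]. apply (H s). Qed.
Lemma eq_th s : Derive (Derive th) s
      = - (2 * Derive m (rr s) / m (rr s)) * Derive rr s * Derive th s.
Proof. destruct Hg as [H _]. apply (H s). Qed.
Lemma r0_eq : rr 0 = r0.
Proof. destruct Hg as [_ [H _]]. exact H. Qed.
Lemma r0_pos : 0 < r0.
Proof. rewrite <- r0_eq. apply rr_pos. Qed.
Lemma drr0 : Derive rr 0 = 0.
Proof. destruct Hg as [_ [_ [H _]]]. exact H. Qed.
Lemma dth0 : Derive th 0 = / m r0.
Proof. destruct Hg as [_ [_ [_ H]]]. exact H. Qed.

Lemma mrr_pos s : 0 < m (rr s).
Proof. apply (m_pos m Hp), rr_pos. Qed.

Lemma clairaut s : m (rr s) ^ 2 * Derive th s = m r0.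
Proof.
  rewrite (const_deriv (fun s => m (rr s) ^ 2 * Derive th s) s 0).
  - rewrite r0_eq, dth0. pose proof (m_pos m Hp r0 r0_pos). field. lra.
  - intro x. auto_derive.
    + repeat split; auto using (dm m Hp), drr, ddth.
    + change (fun x : R => m x) with m. change (fun x : R => rr x) with rr.
      change (fun x : R => Derive th x) with (Derive th).
      rewrite eq_th. pose proof (mrr_pos x). field. lra.
Qed.

Lemma dth_eq s : Derive th s = m r0 / m (rr s) ^ 2.
Proof. pose proof (clairaut s). pose proof (mrr_pos s). rewrite <- H. field. lra. Qed.

Lemma dth_pos s : 0 < Derive th s.
Proof. rewrite dth_eq. pose proof (mrr_pos s). pose proof (m_pos m Hp r0 r0_pos).
  apply Rdiv_lt_0_compat; [lra| apply pow_lt; lra]. Qed.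

Lemma energy s : Derive rr s ^ 2 + m (rr s) ^ 2 * Derive th s ^ 2 = 1.
Proof.
  rewrite (const_deriv (fun s => Derive rr s ^ 2 + m (rr s) ^ 2 * Derive th s ^ 2) s 0).
  - rewrite drr0, r0_eq, dth0. pose proof (m_pos m Hp r0 r0_pos). field. lra.
  - intro x. auto_derive.
    + repeat split; auto using (dm m Hp), drr, ddth, ddrr.
    + change (fun x : R => m x) with m. change (fun x : R => rr x) with rr.
      change (fun x : R => Derive th x) with (Derive th).
      change (fun x : R => Derive rr x) with (Derive rr).
      rewrite eq_th, eq_rr. pose proof (mrr_pos x). field. lra.
Qed.

End Geo.

Section Geo2.
Variable m : R -> R.
Hypothesis Hp : is_profile m.
Hypothesis HG : forall r, 0 < r -> 0 <= Gm m r.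
Variables rr th : R -> R.
Variable r0 : R.
Hypothesis Hg : geo m rr th r0.

Lemma th_int t : 0 <= t -> RInt (fun s => Rabs (Derive th s)) 0 t = th t - th 0.
Proof.
  intros Ht. rewrite (RInt_ext _ (Derive th)).
  - apply RInt_Derive.
    + intros; apply (dth m rr th r0 Hg).
    + intros. exact (@ex_derive_continuous R_AbsRing R_NormedModule _ _ (ddth m rr th r0 Hg x)).
  - intros x _. apply Rabs_pos_eq. left. apply (dth_pos m Hp rr th r0 Hg).
Qed.

Lemma TA1 t : 0 <= t -> Rbar_le (th t - th 0) (turn_angle th).
Proof.
  intros Ht. unfold turn_angle.
  destruct (Lub_Rbar_correct (fun y => exists t, 0 <= t /\
              y = RInt (fun s => Rabs (Derive th s)) 0 t)) as [Hub _].
  apply Hub. exists t. split; auto. rewrite th_int; auto.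
Qed.

Lemma TA2 (B : Rbar) : (forall t, 0 <= t -> Rbar_le (th t - th 0) B) ->
  Rbar_le (turn_angle th) B.
Proof.
  intros H. unfold turn_angle. apply Lub_Rbar_correct.
  intros y [t [Ht ->]]. rewrite th_int; auto.
Qed.

Lemma th_mono a b : a <= b -> th a <= th b.
Proof.
  intros Hab. apply nondecr_deriv; auto.
  - apply (dth m rr th r0 Hg).
  - intros; left; apply (dth_pos m Hp rr th r0 Hg).
Qed.

Lemma m_unb : is_finite (turn_angle th) -> forall B, exists r, 0 <= r /\ B < m r.
Proof.
  intros Hfin B. apply NNPP. intros Hn.
  assert (Hle : forall r, 0 <= r -> m r <= Rmax B 1).
  { intros r Hr. destruct (Rle_lt_dec (m r) B) as [h|h].
    - eapply Rle_trans; [exact h| apply Rmax_l].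
    - exfalso; apply Hn; exists r; auto. }
  set (B' := Rmax B 1) in *. assert (HB' : 1 <= B') by apply Rmax_r.
  set (U := real (turn_angle th)).
  pose proof (r0_pos m rr th r0 Hg) as Hr0.
  pose proof (m_pos m Hp r0 Hr0) as Hc. set (c := m r0) in *.
  assert (Hlow : forall s, c / B' ^ 2 <= Derive th s).
  { intro s. rewrite (dth_eq m Hp rr th r0 Hg). fold c.
    pose proof (mrr_pos m Hp rr th r0 Hg s).
    pose proof (Hle (rr s) ltac:(left; apply (rr_pos m rr th r0 Hg))).
    unfold Rdiv. apply Rmult_le_compat_l; [lra|].
    apply Rinv_le_contravar; [apply pow_lt; lra|]. apply pow_incr. lra. }
  set (t := (Rabs U + 1) * B' ^ 2 / c).
  assert (Ht : 0 < t).
  { unfold t. apply Rdiv_lt_0_compat; [|lra]. apply Rmult_lt_0_compat.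
    pose proof (Rabs_pos U); lra. apply pow_lt; lra. }
  destruct (mvt th 0 t (dth m rr th r0 Hg) Ht) as [xi [_ E]].
  pose proof (Hlow xi).
  assert (Hge : th t - th 0 >= Rabs U + 1).
  { rewrite E, Rminus_0_r. replace (Rabs U + 1) with (c / B' ^ 2 * t).
    - apply Rle_ge. apply Rmult_le_compat_r; lra.
    - unfold t. field. repeat split; try lra; apply pow_nonzero; lra. }
  pose proof (TA1 t ltac:(lra)) as HT. rewrite <- Hfin in HT. simpl in HT. fold U in HT.
  pose proof (Rle_abs U). lra.
Qed.

End Geo2.

Section Unb.
Variable m : R -> R.
Hypothesis Hp : is_profile m.
Hypothesis HG : forall r, 0 < r -> 0 <= Gm m r.
Hypothesis Hunb : forall B, exists r, 0 <= r /\ B < m r.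

Lemma m1_pos r : 0 <= r -> 0 < Derive m r.
Proof.
  intros Hr. destruct (Rlt_le_dec 0 (Derive m r)) as [h|h]; auto. exfalso.
  destruct (Hunb (Rmax r (m r))) as [y [Hy Hmy]].
  destruct (Rle_dec y r) as [h1|h1].
  - pose proof (m_le_id m Hp HG y Hy). pose proof (Rmax_l r (m r)). lra.
  - assert (m y <= m r).
    { assert (Hn2 : - m r <= - m y).
      { apply (nondecr_deriv (fun x => - m x) r y).
        - intro x. auto_derive; repeat split; try apply (dm m Hp).
        - lra.
        - intros x Hx. rewrite Derive_opp.
          pose proof (m1_noninc m Hp HG r x ltac:(lra)). lra. }
      lra. }
    pose proof (Rmax_r r (m r)). lra.
Qed.

Lemma m_strict a b : 0 <= a -> a < b -> m a < m b.
Proof.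
  intros Ha Hab. apply incr_deriv; auto. apply (dm m Hp).
  intros x Hx. apply m1_pos; lra.
Qed.

Lemma m_mono a b : 0 <= a -> a <= b -> m a <= m b.
Proof. intros Ha Hab. destruct (Req_dec a b) as [->|h]; [lra|]. left; apply m_strict; lra. Qed.

Lemma m_nonneg r : 0 <= r -> 0 <= m r.
Proof. intros Hr. rewrite <- (m0 m Hp). apply m_mono; lra. Qed.

End Unb.

Definition ginv (m : R -> R) (y : R) : R :=
  epsilon (inhabits 0) (fun r => 0 <= r /\ m r = y).
Definition Kf (m : R -> R) (y : R) : R := / Derive m (ginv m y).
Definition wf (z : R) : R := / (z * sqrt (z ^ 2 - 1)).
Definition fc (m : R -> R) (c z : R) : R := Kf m (c * z) * wf z.

Lemma cont_to_continuous (f : R -> R) x : continuity_pt f x -> continuous f x.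
Proof. intros H. apply continuity_pt_filterlim in H. exact H. Qed.

Section Inv.
Variable m : R -> R.
Hypothesis Hp : is_profile m.
Hypothesis HG : forall r, 0 < r -> 0 <= Gm m r.
Hypothesis Hunb : forall B, exists r, 0 <= r /\ B < m r.

Lemma m_cont x : continuity_pt m x.
Proof. apply cont_of_ex_derive, (dm m Hp). Qed.

Lemma g_spec y : 0 <= y -> 0 <= ginv m y /\ m (ginv m y) = y.
Proof.
  intros Hy. unfold ginv. apply epsilon_spec.
  destruct (Hunb y) as [R0 [HR HmR]].
  destruct (IVT_cor (fun r => m r - y) 0 R0) as [z [Hz Ez]].
  - intro x. apply continuity_pt_minus; [apply m_cont | apply continuity_pt_const; intros a b; auto].
  - exact HR.
  - rewrite (m0 m Hp). nra.
  - exists z. split; [lra|]. lra.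
Qed.

Lemma g_m r : 0 <= r -> ginv m (m r) = r.
Proof.
  intros Hr. destruct (g_spec (m r) (m_nonneg m Hp HG Hunb r Hr)) as [H1 H2].
  destruct (Rtotal_order (ginv m (m r)) r) as [h|[h|h]]; auto.
  - pose proof (m_strict m Hp HG Hunb _ _ H1 h). lra.
  - pose proof (m_strict m Hp HG Hunb _ _ Hr h). lra.
Qed.

Lemma g_strict y1 y2 : 0 <= y1 -> y1 < y2 -> ginv m y1 < ginv m y2.
Proof.
  intros H1 H12. destruct (g_spec y1 H1) as [a1 b1]. destruct (g_spec y2 ltac:(lra)) as [a2 b2].
  destruct (Rlt_le_dec (ginv m y1) (ginv m y2)) as [h|h]; auto.
  pose proof (m_mono m Hp HG Hunb _ _ a2 h). lra.
Qed.

Lemma g_mono y1 y2 : 0 <= y1 -> y1 <= y2 -> ginv m y1 <= ginv m y2.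
Proof.
  intros H1 H12. destruct (Req_dec y1 y2) as [->|h]; [lra|]. left; apply g_strict; lra.
Qed.

Lemma g_pos y : 0 < y -> 0 < ginv m y.
Proof.
  intros Hy. destruct (g_spec y ltac:(lra)) as [a b].
  destruct a as [a|a]; auto. rewrite <- a, (m0 m Hp) in b. lra.
Qed.

Lemma g_cont y : 0 < y -> continuity_pt (ginv m) y.
Proof.
  intros Hy. unfold continuity_pt, continue_in, limit1_in, limit_in.
  intros eps Heps. simpl. unfold R_dist.
  set (r := ginv m y). assert (Hr : 0 < r) by (apply g_pos; auto).
  assert (Emr : m r = y) by (apply g_spec; lra).
  set (e := Rmin (eps / 2) (r / 2)).
  assert (He : 0 < e) by (apply Rmin_pos; lra).
  assert (He2 : e <= r / 2) by apply Rmin_r.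
  assert (He3 : e <= eps / 2) by apply Rmin_l.
  assert (Ha : m (r - e) < y) by (rewrite <- Emr; apply (m_strict m Hp HG Hunb); lra).
  assert (Hb : y < m (r + e)) by (rewrite <- Emr; apply (m_strict m Hp HG Hunb); lra).
  exists (Rmin (y - m (r - e)) (m (r + e) - y)). split.
  - apply Rmin_pos; lra.
  - intros x [_ Hx].
    pose proof (Rmin_l (y - m (r - e)) (m (r + e) - y)).
    pose proof (Rmin_r (y - m (r - e)) (m (r + e) - y)).
    apply Rabs_def2 in Hx. destruct Hx as [Hx1 Hx2].
    assert (Hx0 : 0 <= x).
    { pose proof (m_nonneg m Hp HG Hunb (r - e) ltac:(lra)). lra. }
    destruct (g_spec x Hx0) as [gx1 gx2].
    assert (L1 : r - e < ginv m x).
    { destruct (Rlt_le_dec (r - e) (ginv m x)) as [h|h]; auto.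
      pose proof (m_mono m Hp HG Hunb _ _ gx1 h). lra. }
    assert (L2 : ginv m x < r + e).
    { destruct (Rlt_le_dec (ginv m x) (r + e)) as [h|h]; auto.
      pose proof (m_mono m Hp HG Hunb (r + e) (ginv m x) ltac:(lra) h). lra. }
    apply Rabs_def1; lra.
Qed.

Lemma K_pos y : 0 <= y -> 0 < Kf m y.
Proof.
  intros Hy. unfold Kf. apply Rinv_0_lt_compat, (m1_pos m Hp HG Hunb), g_spec; auto.
Qed.

Lemma K_mono y1 y2 : 0 <= y1 -> y1 <= y2 -> Kf m y1 <= Kf m y2.
Proof.
  intros H1 H12. unfold Kf.
  pose proof (g_mono y1 y2 H1 H12). destruct (g_spec y1 H1) as [a _].
  apply Rinv_le_contravar.
  - apply (m1_pos m Hp HG Hunb). lra.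
  - apply (m1_noninc m Hp HG). lra.
Qed.

Lemma K_cont y : 0 < y -> continuity_pt (Kf m) y.
Proof.
  intros Hy.
  assert (H : continuity_pt (comp (Derive m) (ginv m)) y).
  { apply continuity_pt_comp. apply g_cont; auto. apply cont_of_ex_derive, (ddm m Hp). }
  assert (Hn : comp (Derive m) (ginv m) y <> 0).
  { unfold comp. apply Rgt_not_eq, (m1_pos m Hp HG Hunb). left; apply g_pos; auto. }
  exact (continuity_pt_inv _ _ H Hn).
Qed.

Lemma w_pos z : 1 < z -> 0 < wf z.
Proof.
  intros Hz. unfold wf. apply Rinv_0_lt_compat. apply Rmult_lt_0_compat; [lra|].
  apply sqrt_lt_R0. nra.
Qed.

Lemma w_cont z : 1 < z -> continuity_pt wf z.
Proof.
  intros Hz. apply cont_of_ex_derive. unfold wf. auto_derive.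
  assert (0 < sqrt (z * (z * 1) + - (1))) by (apply sqrt_lt_R0; nra).
  repeat split; try nra.
Qed.

Lemma fc_cont c z : 0 < c -> 1 < z -> continuity_pt (fc m c) z.
Proof.
  intros Hc Hz.
  assert (H1 : continuity_pt (comp (Kf m) (fun z => c * z)) z).
  { apply continuity_pt_comp.
    - apply continuity_pt_mult; [apply continuity_pt_const; intros a b; auto | apply continuity_pt_id].
    - apply K_cont. nra. }
  exact (continuity_pt_mult _ _ z H1 (w_cont z Hz)).
Qed.

Lemma fc_continuous c z : 0 < c -> 1 < z -> continuous (fc m c) z.
Proof. intros; apply cont_to_continuous, fc_cont; auto. Qed.

Lemma fc_pos c z : 0 < c -> 1 < z -> 0 < fc m c z.
Proof. intros. unfold fc. apply Rmult_lt_0_compat; [apply K_pos; nra | apply w_pos; auto]. Qed.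

Lemma fc_exRInt c a b : 0 < c -> 1 < a -> 1 < b -> ex_RInt (fc m c) a b.
Proof.
  intros Hc Ha Hb. apply (@ex_RInt_continuous R_CompleteNormedModule). intros z Hz.
  apply fc_continuous; auto. pose proof (Rmin_glb_lt a b 1). lra.
Qed.

Lemma Phi_le cu cv a b : 0 < cu -> cu <= cv -> 1 < a -> a <= b ->
  RInt (fc m cu) a b <= RInt (fc m cv) a b.
Proof.
  intros Hu Huv Ha Hab. apply RInt_le; auto.
  - apply fc_exRInt; lra.
  - apply fc_exRInt; lra.
  - intros x Hx. unfold fc. apply Rmult_le_compat_r; [left; apply w_pos; lra|].
    apply K_mono; nra.
Qed.

End Inv.

Definition xf (m rr : R -> R) (r0 s : R) : R := m (rr s) / m r0.

Section Geo3.
Variable m : R -> R.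
Hypothesis Hp : is_profile m.
Hypothesis HG : forall r, 0 < r -> 0 <= Gm m r.
Hypothesis Hunb : forall B, exists r, 0 <= r /\ B < m r.
Variables rr th : R -> R.
Variable r0 : R.
Hypothesis Hg : geo m rr th r0.

Let Hr0 := r0_pos m rr th r0 Hg.
Let Hc : 0 < m r0. Proof. apply (m_pos m Hp), Hr0. Qed.

Lemma ddrr_pos s : 0 < Derive (Derive rr) s.
Proof.
  rewrite (eq_rr m rr th r0 Hg). pose proof (mrr_pos m Hp rr th r0 Hg s).
  pose proof (m1_pos m Hp HG Hunb (rr s) ltac:(left; apply (rr_pos m rr th r0 Hg))).
  pose proof (dth_pos m Hp rr th r0 Hg s).
  apply Rmult_lt_0_compat; [apply Rmult_lt_0_compat; auto| apply pow_lt; auto].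
Qed.

Lemma drr_incr a b : a < b -> Derive rr a < Derive rr b.
Proof.
  intros Hab. apply incr_deriv; auto. apply (ddrr m rr th r0 Hg).
  intros; apply ddrr_pos.
Qed.

Lemma drr_pos s : 0 < s -> 0 < Derive rr s.
Proof. intros Hs. rewrite <- (drr0 m rr th r0 Hg). apply drr_incr; auto. Qed.

Lemma rr_strict a b : 0 <= a -> a < b -> rr a < rr b.
Proof.
  intros Ha Hab. apply incr_deriv; auto. apply (drr m rr th r0 Hg).
  intros x Hx; apply drr_pos; lra.
Qed.

Lemma rr_mono a b : 0 <= a -> a <= b -> rr a <= rr b.
Proof. intros Ha Hab. destruct (Req_dec a b) as [->|h]; [lra|]. left; apply rr_strict; lra. Qed.

Lemma rr_gt s : 0 < s -> r0 < rr s.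
Proof. intros Hs. rewrite <- (r0_eq m rr th r0 Hg). apply rr_strict; lra. Qed.

Lemma rr_unb B : exists S, 0 <= S /\ B <= rr S.
Proof.
  set (d := Derive rr 1). assert (Hd : 0 < d) by (apply drr_pos; lra).
  set (S := 1 + (Rabs B + Rabs (rr 1) + 1) / d).
  assert (HS : 1 < S).
  { unfold S. assert (0 < (Rabs B + Rabs (rr 1) + 1) / d); [|lra].
    apply Rdiv_lt_0_compat; auto. pose proof (Rabs_pos B); pose proof (Rabs_pos (rr 1)); lra. }
  exists S. split; [lra|].
  destruct (mvt rr 1 S (drr m rr th r0 Hg) HS) as [xi [Hxi E]].
  assert (d <= Derive rr xi) by (left; apply drr_incr; lra).
  assert (E2 : (S - 1) * d = Rabs B + Rabs (rr 1) + 1) by (unfold S; field; lra).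
  pose proof (Rle_abs B). pose proof (Rle_abs (- rr 1)). rewrite Rabs_Ropp in H1.
  nra.
Qed.

Lemma x0_eq : xf m rr r0 0 = 1.
Proof. unfold xf. rewrite (r0_eq m rr th r0 Hg). field. lra. Qed.

Lemma x_gt1 s : 0 < s -> 1 < xf m rr r0 s.
Proof.
  intros Hs. unfold xf. apply (Rmult_lt_reg_r (m r0)); auto.
  rewrite Rmult_1_l. unfold Rdiv. rewrite Rmult_assoc, Rinv_l, Rmult_1_r; [|lra].
  apply (m_strict m Hp HG Hunb); [lra|]. apply rr_gt; auto.
Qed.

Lemma x_mono a b : 0 <= a -> a <= b -> xf m rr r0 a <= xf m rr r0 b.
Proof.
  intros Ha Hab. unfold xf, Rdiv. apply Rmult_le_compat_r; [left; apply Rinv_0_lt_compat; auto|].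
  apply (m_mono m Hp HG Hunb); [left; apply (rr_pos m rr th r0 Hg)|]. apply rr_mono; auto.
Qed.

Lemma x_cont : continuity (xf m rr r0).
Proof.
  intro s. apply cont_of_ex_derive. unfold xf. auto_derive.
  repeat split; try apply (dm m Hp); try apply (drr m rr th r0 Hg); lra.
Qed.

Lemma x_unb B : exists S, 0 <= S /\ B <= xf m rr r0 S.
Proof.
  destruct (Hunb (B * m r0)) as [r1 [Hr1 Hmr1]].
  destruct (rr_unb r1) as [S [HS HrS]].
  exists S. split; auto. unfold xf.
  pose proof (m_mono m Hp HG Hunb r1 (rr S) Hr1 HrS).
  apply (Rmult_le_reg_r (m r0)); auto. unfold Rdiv.
  rewrite Rmult_assoc, Rinv_l, Rmult_1_r; lra.
Qed.

Definition dxf (s : R) := Derive m (rr s) * Derive rr s / m r0.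

Lemma dth_ident s : 0 < s -> Derive th s = dxf s * fc m (m r0) (xf m rr r0 s).
Proof.
  intros Hs. unfold fc, dxf, Kf, wf.
  assert (E1 : m r0 * xf m rr r0 s = m (rr s)) by (unfold xf; field; lra).
  rewrite E1. rewrite (g_m m Hp HG Hunb); [|left; apply (rr_pos m rr th r0 Hg)].
  pose proof (mrr_pos m Hp rr th r0 Hg s) as Hm.
  pose proof (drr_pos s Hs) as Hd.
  pose proof (m1_pos m Hp HG Hunb (rr s) ltac:(left; apply (rr_pos m rr th r0 Hg))) as Hm1.
  assert (En := energy m Hp rr th r0 Hg s). rewrite (dth_eq m Hp rr th r0 Hg) in En.
  assert (E2 : xf m rr r0 s ^ 2 - 1 = (m (rr s) * Derive rr s / m r0) ^ 2).
  { unfold xf. apply (Rmult_eq_reg_r (m r0 ^ 2)); [|apply pow_nonzero; lra].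
    replace ((m (rr s) * Derive rr s / m r0) ^ 2 * m r0 ^ 2) with (m (rr s) ^ 2 * Derive rr s ^ 2)
      by (field; lra).
    replace ((m (rr s) / m r0) ^ 2 - 1) with ((m (rr s) ^ 2 - m r0 ^ 2) / m r0 ^ 2) by (field; lra).
    replace (Derive rr s ^ 2) with (1 - m (rr s) ^ 2 * (m r0 / m (rr s) ^ 2) ^ 2) by lra.
    field. lra. }
  rewrite E2, sqrt_pow2.
  - rewrite (dth_eq m Hp rr th r0 Hg). unfold xf. field. repeat split; lra.
  - apply Rmult_le_pos; [nra|]. left; apply Rinv_0_lt_compat; auto.
Qed.

Lemma I1 s1 s2 : 0 < s1 -> s1 <= s2 ->
  th s2 - th s1 = RInt (fc m (m r0)) (xf m rr r0 s1) (xf m rr r0 s2).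
Proof.
  intros H1 H12.
  rewrite <- (@RInt_comp R_CompleteNormedModule (fc m (m r0)) (xf m rr r0) dxf s1 s2).
  - rewrite <- RInt_Derive.
    + apply RInt_ext. intros y Hy. rewrite Rmin_left in Hy by lra.
      change (scal (dxf y) (fc m (m r0) (xf m rr r0 y))) with (dxf y * fc m (m r0) (xf m rr r0 y)).
      rewrite dth_ident; [reflexivity|lra].
    + intros; apply (dth m rr th r0 Hg).
    + intros. exact (@ex_derive_continuous R_AbsRing R_NormedModule _ _ (ddth m rr th r0 Hg x)).
  - intros y Hy. rewrite Rmin_left in Hy by lra.
    apply (fc_continuous m Hp HG Hunb); auto. apply x_gt1; lra.
  - intros y Hy. split.
    + unfold xf, dxf. auto_derive.
      * repeat split; try apply (dm m Hp); try apply (drr m rr th r0 Hg); lra.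
      * change (fun x : R => m x) with m. change (fun x : R => rr x) with rr. field. lra.
    + apply (@ex_derive_continuous R_AbsRing R_NormedModule). unfold dxf. auto_derive.
      repeat split; try apply (ddm m Hp); try apply (drr m rr th r0 Hg); try apply (ddrr m rr th r0 Hg); lra.
Qed.

End Geo3.

Lemma lim0 (f : R -> R) (T : Rbar) (t d s0 : R) : continuity_pt f 0 -> 0 < s0 ->
  (forall s, 0 < s <= s0 -> Rbar_le (f t - f s + d) T) -> Rbar_le (f t - f 0 + d) T.
Proof.
  intros Hf Hs0 H. destruct T as [V| |]; simpl in *; auto.
  - destruct (Rle_dec (f t - f 0 + d) V) as [h|h]; auto. exfalso.
    apply Rnot_le_lt in h. set (e := f t - f 0 + d - V).
    unfold continuity_pt, continue_in, limit1_in, limit_in in Hf.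
    destruct (Hf e ltac:(unfold e; lra)) as [alp [Halp Hc]].
    set (s := Rmin (alp / 2) s0).
    assert (Hs : 0 < s) by (apply Rmin_pos; lra).
    assert (Hs1 : s <= alp / 2) by apply Rmin_l.
    assert (Hs2 : s <= s0) by apply Rmin_r.
    specialize (Hc s). simpl in Hc. unfold R_dist in Hc.
    assert (Hcs : Rabs (f s - f 0) < e).
    { apply Hc. split.
      - split; [exact I| lra].
      - rewrite Rminus_0_r, Rabs_pos_eq; lra. }
    specialize (H s ltac:(lra)). apply Rabs_def2 in Hcs. unfold e in Hcs. lra.
  - exact (H s0 ltac:(lra)).
Qed.

Section Cmp.
Variable m : R -> R.
Hypothesis Hp : is_profile m.
Hypothesis HG : forall r, 0 < r -> 0 <= Gm m r.
Hypothesis Hunb : forall B, exists r, 0 <= r /\ B < m r.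
Variables ur ut vr vt : R -> R.
Variables ru rv : R.
Hypothesis Hgu : geo m ur ut ru.
Hypothesis Hgv : geo m vr vt rv.

Lemma cmp (d : R) (P : R -> R -> Prop) :
  (forall a b, 1 < a -> a <= b -> P a b -> RInt (fc m (m ru)) a b + d <= RInt (fc m (m rv)) a b) ->
  forall s t, 0 < s -> s <= t -> P (xf m ur ru s) (xf m ur ru t) ->
  Rbar_le (ut t - ut s + d) (turn_angle vt).
Proof.
  intros HP s t Hs Hst HPst.
  set (a := xf m ur ru s) in *. set (b := xf m ur ru t) in *.
  assert (Ha : 1 < a) by (apply (x_gt1 m Hp HG Hunb ur ut ru Hgu); auto).
  assert (Hab : a <= b) by (apply (x_mono m Hp HG Hunb ur ut ru Hgu); lra).
  destruct (x_unb m Hp HG Hunb vr vt rv Hgv b) as [S [HS HbS]].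
  pose proof (x0_eq m Hp vr vt rv Hgv) as Hx0.
  pose proof (x_cont m Hp vr vt rv Hgv) as Hxc.
  destruct (IVT_cor (fun s => xf m vr rv s - a) 0 S) as [s1 [Hs1 E1]]; auto.
  { intro x. apply continuity_pt_minus; [apply Hxc | apply continuity_pt_const; intros u v; auto]. }
  { cbv beta. rewrite Hx0. apply Rmult_le_0_r; lra. }
  destruct (IVT_cor (fun s => xf m vr rv s - b) s1 S) as [s2 [Hs2 E2]]; try lra.
  { intro x. apply continuity_pt_minus; [apply Hxc | apply continuity_pt_const; intros u v; auto]. }
  { cbv beta in E1 |- *. replace (xf m vr rv s1) with a by lra. apply Rmult_le_0_r; lra. }
  cbv beta in E1, E2.
  assert (Hs1p : 0 < s1).
  { destruct (Rle_lt_or_eq_dec 0 s1) as [h|h]; [lra| auto |].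
    subst s1. rewrite Hx0 in E1. lra. }
  pose proof (I1 m Hp HG Hunb ur ut ru Hgu s t Hs Hst) as Iu. fold a b in Iu.
  pose proof (I1 m Hp HG Hunb vr vt rv Hgv s1 s2 Hs1p ltac:(lra)) as Iv.
  replace (xf m vr rv s1) with a in Iv by lra. replace (xf m vr rv s2) with b in Iv by lra.
  pose proof (HP a b Ha Hab HPst).
  pose proof (th_mono m Hp vr vt rv Hgv 0 s1 ltac:(lra)).
  apply (Rbar_le_trans _ (vt s2 - vt 0)).
  - simpl. lra.
  - apply (TA1 m Hp vr vt rv Hgv). lra.
Qed.

End Cmp.

Section Cmp2.
Variable m : R -> R.
Hypothesis Hp : is_profile m.
Hypothesis HG : forall r, 0 < r -> 0 <= Gm m r.
Hypothesis Hunb : forall B, exists r, 0 <= r /\ B < m r.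
Variables ur ut vr vt : R -> R.
Variables ru rv : R.
Hypothesis Hgu : geo m ur ut ru.
Hypothesis Hgv : geo m vr vt rv.

Lemma le_part :
  (forall a b, 1 < a -> a <= b -> RInt (fc m (m ru)) a b <= RInt (fc m (m rv)) a b) ->
  Rbar_le (turn_angle ut) (turn_angle vt).
Proof.
  intros H. apply (TA2 m Hp ur ut ru Hgu). intros t Ht.
  destruct Ht as [Ht|Ht].
  - replace (ut t - ut 0) with (ut t - ut 0 + 0) by ring.
    apply (lim0 ut (turn_angle vt) t 0 t).
    + apply cont_of_ex_derive, (dth m ur ut ru Hgu).
    + exact Ht.
    + intros s Hs. apply (cmp m Hp HG Hunb ur ut vr vt ru rv Hgu Hgv 0 (fun _ _ => True)); try lra; auto.
      intros a b Ha Hab _. rewrite Rplus_0_r. apply H; auto.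
  - subst t. replace (ut 0 - ut 0) with (vt 0 - vt 0) by ring.
    apply (TA1 m Hp vr vt rv Hgv). lra.
Qed.

Lemma lt_part (d x0 z : R) : 0 < d -> 1 < x0 -> 0 < z ->
  (forall a b, 1 < a -> a <= x0 -> x0 + z <= b ->
     RInt (fc m (m ru)) a b + d <= RInt (fc m (m rv)) a b) ->
  is_finite (turn_angle ut) -> turn_angle ut <> turn_angle vt.
Proof.
  intros Hd Hx0 Hz H Hfin Heq.
  set (U := real (turn_angle ut)).
  assert (Ht1 : exists t1, 0 <= t1 /\ U - d < ut t1 - ut 0).
  { apply NNPP. intros Hn.
    assert (Hle : Rbar_le (turn_angle ut) (U - d)).
    { apply (TA2 m Hp ur ut ru Hgu). intros t Ht. simpl.
      destruct (Rle_dec (ut t - ut 0) (U - d)) as [h|h]; auto.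
      exfalso. apply Hn. exists t. split; auto. lra. }
    rewrite <- Hfin in Hle. simpl in Hle. fold U in Hle. lra. }
  destruct Ht1 as [t1 [Ht1 Hut1]].
  destruct (x_unb m Hp HG Hunb ur ut ru Hgu (x0 + z)) as [T2 [HT2 HxT2]].
  pose proof (x0_eq m Hp ur ut ru Hgu) as Hx00.
  assert (HT2p : 0 < T2).
  { destruct HT2 as [h|h]; auto. subst T2. lra. }
  set (t := Rmax t1 T2).
  assert (Htt1 : t1 <= t) by apply Rmax_l.
  assert (HtT2 : T2 <= t) by apply Rmax_r.
  assert (Hxt : x0 + z <= xf m ur ru t).
  { eapply Rle_trans; [exact HxT2|]. apply (x_mono m Hp HG Hunb ur ut ru Hgu); lra. }
  assert (Hutt : ut t1 <= ut t) by (apply (th_mono m Hp ur ut ru Hgu); lra).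
  destruct (IVT_cor (fun s => xf m ur ru s - x0) 0 t) as [s0 [Hs0 E0]]; try lra.
  { intro x. apply continuity_pt_minus; [apply (x_cont m Hp ur ut ru Hgu) | apply continuity_pt_const; intros u v; auto]. }
  { cbv beta. rewrite Hx00. apply Rmult_le_0_r; lra. }
  cbv beta in E0.
  assert (Hs0p : 0 < s0).
  { destruct (Rle_lt_or_eq_dec 0 s0) as [h|h]; [lra| auto |].
    subst s0. rewrite Hx00 in E0. lra. }
  assert (HL : Rbar_le (ut t - ut 0 + d) (turn_angle vt)).
  { apply (lim0 ut (turn_angle vt) t d s0).
    - apply cont_of_ex_derive, (dth m ur ut ru Hgu).
    - exact Hs0p.
    - intros s Hs.
      apply (cmp m Hp HG Hunb ur ut vr vt ru rv Hgu Hgv d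
               (fun a b => a <= x0 /\ x0 + z <= b)); try lra.
      + intros a b Ha Hab [h1 h2]. apply H; auto.
      + split; auto.
        assert (xf m ur ru s <= xf m ur ru s0) by (apply (x_mono m Hp HG Hunb ur ut ru Hgu); lra).
        lra. }
  rewrite <- Heq, <- Hfin in HL. simpl in HL. fold U in HL. lra.
Qed.

End Cmp2.

Lemma chasles (f : R -> R) a b c : ex_RInt f a b -> ex_RInt f b c ->
  RInt f a b + RInt f b c = RInt f a c.
Proof. intros H1 H2. exact (RInt_Chasles f a b c H1 H2). Qed.

Lemma RInt_plus_cst (f : R -> R) a b c : ex_RInt f a b ->
  RInt (fun y => f y + c) a b = RInt f a b + (b - a) * c.
Proof.
  intros H. assert (E := @RInt_plus R_CompleteNormedModule f (fun _ => c) a b H (ex_RInt_const a b c)).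
  rewrite RInt_const in E. exact E.
Qed.

Lemma ex_RInt_plus_cst (f : R -> R) a b c : ex_RInt f a b -> ex_RInt (fun y => f y + c) a b.
Proof.
  intros H. exact (@ex_RInt_plus R_CompleteNormedModule f (fun _ => c) a b H (ex_RInt_const a b c)).
Qed.

Section Final.
Variable m : R -> R.
Hypothesis Hp : is_profile m.
Hypothesis HG : forall r, 0 < r -> 0 <= Gm m r.
Hypothesis Hunb : forall B, exists r, 0 <= r /\ B < m r.

Lemma strict_gap ru rv : 0 < ru -> ru < rv ->
  (exists r1, ru <= r1 /\ Derive (Derive m) r1 < 0) ->
  exists d x0 z, 0 < d /\ 1 < x0 /\ 0 < z /\
   (forall a b, 1 < a -> a <= x0 -> x0 + z <= b ->
     RInt (fc m (m ru)) a b + d <= RInt (fc m (m rv)) a b).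
Proof.
  intros Hru Hruv [r1 [Hr1 Hc2]].
  pose proof (cont_of_ex_derive _ _ (dddm m Hp r1)) as Hcont.
  unfold continuity_pt, continue_in, limit1_in, limit_in in Hcont.
  destruct (Hcont (- Derive (Derive m) r1 / 2) ltac:(lra)) as [alp [Halp Hc]].
  assert (Hneg : forall r, Rabs (r - r1) < alp -> Derive (Derive m) r < 0).
  { intros r Hr. destruct (Req_dec r r1) as [->|hne]; auto.
    specialize (Hc r). simpl in Hc. unfold R_dist in Hc.
    assert (Habs : Rabs (Derive (Derive m) r - Derive (Derive m) r1) < - Derive (Derive m) r1 / 2).
    { apply Hc. split; [split; [exact I| auto] | auto]. }
    apply Rabs_def2 in Habs. lra. }
  set (p := r1 + alp / 2).
  assert (HA : forall r, p < r -> Derive m r < Derive m p).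
  { intros r Hr. set (r' := Rmin r (r1 + 3 * alp / 4)).
    assert (H1 : p < r'). { unfold r'. apply Rmin_glb_lt; unfold p in *; lra. }
    assert (H2 : r' <= r) by apply Rmin_l.
    assert (H3 : r' <= r1 + 3 * alp / 4) by apply Rmin_r.
    destruct (mvt (Derive m) p r' (ddm m Hp) H1) as [xi [Hxi E]].
    assert (Derive (Derive m) xi < 0) by (apply Hneg; apply Rabs_def1; unfold p in *; lra).
    pose proof (m1_noninc m Hp HG r' r ltac:(unfold p in *; lra)). nra. }
  set (cu := m ru). set (cv := m rv).
  assert (Hcu : 0 < cu) by (apply (m_pos m Hp); auto).
  assert (Hcuv : cu < cv) by (apply (m_strict m Hp HG Hunb); lra).
  assert (Hmp : cu < m p) by (apply (m_strict m Hp HG Hunb); unfold p; lra).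
  set (x0 := m p / cu).
  assert (Hx0 : 1 < x0).
  { unfold x0. apply (Rmult_lt_reg_r cu); auto. unfold Rdiv.
    rewrite Rmult_assoc, Rinv_l, Rmult_1_r; lra. }
  assert (E : cu * x0 = m p) by (unfold x0; field; lra).
  assert (Hp0 : 0 <= p) by (unfold p; lra).
  assert (Kd : Kf m (cu * x0) < Kf m (cv * x0)).
  { unfold Kf. rewrite E, (g_m m Hp HG Hunb p Hp0).
    assert (Hgt : p < ginv m (cv * x0)).
    { rewrite <- (g_m m Hp HG Hunb p Hp0). apply (g_strict m Hp HG Hunb).
      - apply (m_nonneg m Hp HG Hunb); auto.
      - rewrite <- E. nra. }
    pose proof (HA _ Hgt).
    pose proof (m1_pos m Hp HG Hunb (ginv m (cv * x0)) ltac:(lra)).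
    apply Rinv_lt_contravar; auto. nra. }
  set (Dfn := fun y => fc m cv y - fc m cu y).
  assert (HD0 : 0 < Dfn x0).
  { unfold Dfn, fc. pose proof (w_pos x0 Hx0). nra. }
  assert (HDc : continuity_pt Dfn x0).
  { exact (continuity_pt_minus _ _ x0 (fc_cont m Hp HG Hunb cv x0 ltac:(lra) Hx0)
              (fc_cont m Hp HG Hunb cu x0 Hcu Hx0)). }
  unfold continuity_pt, continue_in, limit1_in, limit_in in HDc.
  destruct (HDc (Dfn x0 / 2) ltac:(lra)) as [alp2 [Halp2 Hc2']].
  assert (HDp : forall y, Rabs (y - x0) < alp2 -> Dfn x0 / 2 < Dfn y).
  { intros y Hy. destruct (Req_dec y x0) as [->|hne]; [lra|].
    specialize (Hc2' y). simpl in Hc2'. unfold R_dist in Hc2'.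
    assert (Habs : Rabs (Dfn y - Dfn x0) < Dfn x0 / 2).
    { apply Hc2'. split; [split; [exact I| auto] | auto]. }
    apply Rabs_def2 in Habs. lra. }
  exists (Dfn x0 / 2 * (alp2 / 2)), x0, (alp2 / 2).
  split; [nra|]. split; [auto|]. split; [lra|].
  intros a b Ha Hax Hb.
  assert (Ex : forall c u v, 0 < c -> 1 < u -> 1 < v -> ex_RInt (fc m c) u v)
    by (intros; apply (fc_exRInt m Hp HG Hunb); auto).
  rewrite <- (chasles (fc m cu) a x0 b), <- (chasles (fc m cu) x0 (x0 + alp2 / 2) b); try apply Ex; try lra.
  rewrite <- (chasles (fc m cv) a x0 b), <- (chasles (fc m cv) x0 (x0 + alp2 / 2) b); try apply Ex; try lra.
  pose proof (Phi_le m Hp HG Hunb cu cv a x0 Hcu ltac:(lra) Ha Hax).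
  pose proof (Phi_le m Hp HG Hunb cu cv (x0 + alp2 / 2) b Hcu ltac:(lra) ltac:(lra) Hb).
  assert (Hmid : RInt (fun y => fc m cu y + Dfn x0 / 2) x0 (x0 + alp2 / 2)
                 <= RInt (fc m cv) x0 (x0 + alp2 / 2)).
  { apply RInt_le; try lra.
    - apply ex_RInt_plus_cst, Ex; lra.
    - apply Ex; lra.
    - intros y Hy. assert (HDy : Dfn x0 / 2 < Dfn y) by (apply HDp; apply Rabs_def1; lra).
      unfold Dfn in HDy |- *. lra. }
  rewrite RInt_plus_cst in Hmid by (apply Ex; lra).
  replace (x0 + alp2 / 2 - x0) with (alp2 / 2) in Hmid by ring.
  lra.
Qed.

Lemma flat_eq ru rv : 0 < ru -> ru <= rv -> (forall r, ru <= r -> Gm m r = 0) ->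
  forall z, 1 <= z -> fc m (m ru) z = fc m (m rv) z.
Proof.
  intros Hru Hruv Hz.
  assert (Hm1 : forall r, ru <= r -> Derive m r = Derive m ru).
  { intros r Hr. destruct (Req_dec r ru) as [->|hne]; auto.
    destruct (mvt (Derive m) ru r (ddm m Hp)) as [xi [Hxi E]]; [lra|].
    assert (H2 : Derive (Derive m) xi = 0).
    { pose proof (Hz xi ltac:(lra)) as H. unfold Gm in H. pose proof (m_pos m Hp xi ltac:(lra)).
      set (a := Derive (Derive m) xi) in *.
      assert (Ea : a = - (- a / m xi) * m xi) by (field; lra).
      rewrite Ea, H. ring. }
    rewrite H2 in E. lra. }
  assert (HK : forall y, m ru <= y -> Kf m y = / Derive m ru).
  { intros y Hy. unfold Kf. f_equal. apply Hm1.
    rewrite <- (g_m m Hp HG Hunb ru ltac:(lra)). apply (g_mono m Hp HG Hunb); auto.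
    apply (m_nonneg m Hp HG Hunb); lra. }
  intros z Hz1. unfold fc.
  pose proof (m_pos m Hp ru Hru).
  pose proof (m_mono m Hp HG Hunb ru rv ltac:(lra) Hruv).
  rewrite (HK (m ru * z)), (HK (m rv * z)); auto; nra.
Qed.

End Final.

Theorem proposition4p1 (m : R -> R) (ru thu rv thv : R)
  (ru_t ru_r rv_t rv_r : R -> R) :
  is_profile m ->
  (forall r, 0 < r -> 0 <= Gm m r) ->
  0 < ru -> ru < rv ->
  gamma_of m ru thu ru_r ru_t ->
  gamma_of m rv thv rv_r rv_t ->
  is_finite (turn_angle ru_t) ->
  Rbar_le (turn_angle ru_t) (turn_angle rv_t) /\
  (turn_angle ru_t = turn_angle rv_t <-> (forall r, ru <= r -> Gm m r = 0)).
Proof.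
  intros Hp HG Hru Hruv Hu Hv Hfin.
  assert (Hgu : geo m ru_r ru_t ru).
  { destruct Hu as [a [b [_ [d e]]]]. exact (conj a (conj b (conj d e))). }
  assert (Hgv : geo m rv_r rv_t rv).
  { destruct Hv as [a [b [_ [d e]]]]. exact (conj a (conj b (conj d e))). }
  pose proof (m_unb m Hp ru_r ru_t ru Hgu Hfin) as Hunb.
  assert (Hcu : 0 < m ru) by (apply (m_pos m Hp); auto).
  assert (Hcuv : m ru < m rv) by (apply (m_strict m Hp HG Hunb); lra).
  split.
  - apply (le_part m Hp HG Hunb ru_r ru_t rv_r rv_t ru rv Hgu Hgv).
    intros a b Ha Hab. apply (Phi_le m Hp HG Hunb); auto; lra.
  - split.
    + intros Heq r Hr. apply NNPP. intros Hne.
      assert (Hneg : Derive (Derive m) r < 0).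
      { pose proof (HG r ltac:(lra)) as H. unfold Gm in H, Hne.
        pose proof (m_pos m Hp r ltac:(lra)).
        pose proof (m2_nonpos m Hp HG r ltac:(lra)).
        destruct H1 as [h|h]; auto. exfalso. apply Hne. rewrite h. field. lra. }
      destruct (strict_gap m Hp HG Hunb ru rv Hru Hruv) as [d [x0 [z [Hd [Hx0 [Hz H]]]]]].
      { exists r. split; auto. }
      exact (lt_part m Hp HG Hunb ru_r ru_t rv_r rv_t ru rv Hgu Hgv d x0 z Hd Hx0 Hz H Hfin Heq).
    + intros Hz. apply Rbar_le_antisym.
      * apply (le_part m Hp HG Hunb ru_r ru_t rv_r rv_t ru rv Hgu Hgv).
        intros a b Ha Hab. right. apply RInt_ext. intros x Hx.
        apply (flat_eq m Hp HG Hunb); try lra; try exact Hz. rewrite Rmin_left in Hx by lra. lra.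
      * apply (le_part m Hp HG Hunb rv_r rv_t ru_r ru_t rv ru Hgv Hgu).
        intros a b Ha Hab. right. apply RInt_ext. intros x Hx.
        symmetry. apply (flat_eq m Hp HG Hunb); try lra; try exact Hz. rewrite Rmin_left in Hx by lra. lra.
Qed.
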